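(* Let $n\ge 1$, $B\in\{1,\dots,n\}$ and $p\in(\tfrac12,1)$, and consider the crowdfunding game $\Gamma(B,n)$ described in the context. Then $\Gamma(B,n)$ has a \emph{unique} symmetric non-trivial Bayes-Nash equilibrium $\sigma=(\sigma_1,\dots,\sigma_n)$. Moreover, there is $\lambda=\lambda(B,n)\in[0,1)$ such that for every player $i$, $\sigma_i(H)=1$ and $\sigma_i(L)=\lambda$.
   Context: The crowdfunding game $\Gamma(B,n)$ with parameter $p\in(\tfrac12,1)$: there are $n$ players $N=\{1,\dots,n\}$ and a threshold $B\in\{1,\dots,n\}$. A state of nature $\omega\in\Omega=\{H,L\}$ is drawn with $\Pr(\omega=H)=\Pr(\omega=L)=\tfrac12$. Conditional on $\omega$, each player $i$ independently receives a private signal $s_i\in\{H,L\}$ with $\Pr(s_i=\omega\mid\omega)=p$. Each player chooses an action $a_i\in\{0,1\}$ (1 = commit to buy, 0 = opt out), simultaneously. Payoffs: $u_i(a,\omega)=1$ if $a_i=1$, $\sum_{j\in N}a_j\ge B$ and $\omega=H$; $u_i(a,\omega)=-1$ if $a_i=1$, $\sum_{j\in N}a_j\ge B$ and $\omega=L$; and $u_i=0$ otherwise. A strategy of player $i$ is a map $\sigma_i:\{H,L\}\to[0,1]$, where $\sigma_i(s)$ is the probability that $i$ plays action $1$ after signal $s$. A Bayes-Nash equilibrium is a profile $\sigma$ such that no player $i$ can increase her expected utility by replacing $\sigma_i$ with any other map $f:\{H,L\}\to\{0,1\}$. A profile $\sigma$ is non-trivial if $\Pr_\sigma(\sum_{i}a_i\ge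 B)>0$, and symmetric if $\sigma_i=\sigma_j$ for all players $i,j$. *)

(* Defs.v *)
From HB Require Import structures.
From mathcomp Require Import all_boot all_order all_algebra.
From mathcomp Require Import reals.
Set Implicit Arguments. Unset Strict Implicit. Unset Printing Implicit Defensive.
Import Order.TTheory GRing.Theory Num.Theory.
Local Open Scope ring_scope.

(* States and signals are encoded as bool:
   true = H, false = L.  Actions are bool: true = 1 (commit), false = 0.
   A (mixed) strategy profile is sigma : 'I_n -> bool -> R, where
   sigma i s is the probability that player i plays 1 after signal s. *)

Section Crowdfunding.
Variable R : realType.
Variable n : nat.

Definition sig_prob (p : R) (w s : bool) : R := if s == w then p else 1 - p.

Definition act_prob (x : R) (a : bool) : R := if a then x else 1 - x.

Definition ncommit (a : {ffun 'I_n -> bool}) : nat := \sum_(j < n) nat_of_bool (a j).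

Definition payoff (B : nat) (a : {ffun 'I_n -> bool}) (i : 'I_n) (w : bool) : R :=
  if a i && (B <= ncommit a)%N then (if w then 1 else -1) else 0.

Definition prof_prob (sigma : 'I_n -> bool -> R) (s a : {ffun 'I_n -> bool}) : R :=
  \prod_(j < n) act_prob (sigma j (s j)) (a j).

Definition signals_prob (p : R) (w : bool) (s : {ffun 'I_n -> bool}) : R :=
  \prod_(j < n) sig_prob p w (s j).

Definition exp_util (p : R) (B : nat) (sigma : 'I_n -> bool -> R) (i : 'I_n) : R :=
  \sum_(w : bool) 2^-1 * \sum_(s : {ffun 'I_n -> bool})
     signals_prob p w s * \sum_(a : {ffun 'I_n -> bool})
        prof_prob sigma s a * payoff B a i w.

Definition success_prob (p : R) (B : nat) (sigma : 'I_n -> bool -> R) : R :=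
  \sum_(w : bool) 2^-1 * \sum_(s : {ffun 'I_n -> bool})
     signals_prob p w s * \sum_(a : {ffun 'I_n -> bool} | (B <= ncommit a)%N)
        prof_prob sigma s a.

Definition is_profile (sigma : 'I_n -> bool -> R) : Prop :=
  forall i s, 0 <= sigma i s <= 1.

Definition deviate (sigma : 'I_n -> bool -> R) (i : 'I_n) (f : bool -> bool) :
  'I_n -> bool -> R :=
  fun j => if j == i then (fun s => (nat_of_bool (f s))%:R) else sigma j.

Definition is_BNE (p : R) (B : nat) (sigma : 'I_n -> bool -> R) : Prop :=
  is_profile sigma /\
  forall (i : 'I_n) (f : bool -> bool),
    exp_util p B (deviate sigma i f) i <= exp_util p B sigma i.

Definition nontrivial (p : R) (B : nat) (sigma : 'I_n -> bool -> R) : Prop :=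
  0 < success_prob p B sigma.

Definition symmetric (sigma : 'I_n -> bool -> R) : Prop :=
  forall i j : 'I_n, forall s, sigma i s = sigma j s.

Definition sym_nt_BNE (p : R) (B : nat) (sigma : 'I_n -> bool -> R) : Prop :=
  is_BNE p B sigma /\ nontrivial p B sigma /\ symmetric sigma.

End Crowdfunding.

(* Main.v *)
Require Import Defs.
From HB Require Import structures.
From mathcomp Require Import all_boot all_order all_algebra.
From mathcomp Require Import reals.
Import Order.TTheory GRing.Theory Num.Theory.
Local Open Scope ring_scope.
Set Warnings "-all".
From mathcomp Require Import ring lra zify.
Import Order.TTheory GRing.Theory Num.Theory.
Local Open Scope ring_scope.

Section Game.
Variable R : realType.
Variable n : nat.
Implicit Types (sigma : 'I_n -> bool -> R).

Definition piw (p : R) (w : bool) sigma (j : 'I_n) : R :=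
  sig_prob p w true * sigma j true + sig_prob p w false * sigma j false.

Lemma sig_sum (p : R) w : sig_prob p w true + sig_prob p w false = 1.
Proof. by case: w; rewrite /sig_prob /=; ring. Qed.

Lemma inner_sum (p : R) w sigma (g : {ffun 'I_n -> bool} -> R) :
  \sum_(s : {ffun 'I_n -> bool}) signals_prob p w s * \sum_(a : {ffun 'I_n -> bool}) prof_prob sigma s a * g a =
  \sum_(a : {ffun 'I_n -> bool}) (\prod_j act_prob (piw p w sigma j) (a j)) * g a.
Proof.
under eq_bigr do rewrite big_distrr.
rewrite exchange_big /=; apply: eq_bigr => a _.
idtac.
have -> : \prod_j act_prob (piw p w sigma j) (a j) =
   \sum_(s : {ffun 'I_n -> bool}) signals_prob p w s * prof_prob sigma s a.
  rewrite /signals_prob /prof_prob.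
  under [RHS]eq_bigr do rewrite -big_split /=.
  rewrite -(bigA_distr_bigA (fun j b => sig_prob p w b * act_prob (sigma j b) (a j))).
  apply: eq_bigr => j _; rewrite big_bool /= /piw /act_prob.
  have := sig_sum p w.
  by case: (a j) => /= H; [|rewrite -[X in X - _]H]; ring.
rewrite big_distrl; by apply: eq_bigr => s _; rewrite mulrA.
Qed.

Definition Gf (B : nat) (pi : 'I_n -> R) (i : 'I_n) : R :=
  \sum_(a : {ffun 'I_n -> bool})
    (\prod_j act_prob (if j == i then 1 else pi j) (a j)) * (B <= ncommit a)%N%:R.

Lemma Vsplit (B : nat) (pi : 'I_n -> R) i :
  \sum_(a : {ffun 'I_n -> bool}) (\prod_j act_prob (pi j) (a j)) * (a i && (B <= ncommit a)%N)%:R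
  = pi i * Gf B pi i.
Proof.
rewrite /Gf big_distrr; apply: eq_bigr => a _ /=.
rewrite (bigD1 i) //= [in RHS](bigD1 i) //= eqxx.
have -> : \prod_(j < n | j != i) act_prob (if j == i then 1 else pi j) (a j) =
          \prod_(j < n | j != i) act_prob (pi j) (a j).
  by apply: eq_bigr => j /negbTE ->.
rewrite /act_prob; case: (a i) => /=; ring.
Qed.

Lemma Gf_ext (B : nat) (pi1 pi2 : 'I_n -> R) i : (forall j, j != i -> pi1 j = pi2 j) -> Gf B pi1 i = Gf B pi2 i.
Proof.
move=> H; apply: eq_bigr => a _; congr (_ * _); apply: eq_bigr => j _.
by case: eqP => // /eqP /H ->.
Qed.

Lemma util_decomp (p : R) (B : nat) sigma i :
  exp_util p B sigma i = 2^-1 * (piw p true sigma i * Gf B (piw p true sigma) i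
                               - piw p false sigma i * Gf B (piw p false sigma) i).
Proof.
rewrite /exp_util big_bool /= !inner_sum.
have Pt a : payoff R B a i true = (a i && (B <= ncommit a)%N)%:R.
  by rewrite /payoff; case: ifP.
have Pf a : payoff R B a i false = - (a i && (B <= ncommit a)%N)%:R.
  by rewrite /payoff; case: ifP => //; rewrite oppr0.
under eq_bigr do rewrite Pt.
under [X in _ + _ * X]eq_bigr do rewrite Pf mulrN.
rewrite sumrN !Vsplit; ring.
Qed.

Definition nfail (a : {ffun 'I_n -> bool}) : nat := \sum_(j < n) nat_of_bool (~~ a j).

Lemma ncommit_nfail a : (ncommit a + nfail a = n)%N.
Proof.
rewrite /ncommit /nfail -big_split /=.
under eq_bigr do rewrite addnC addn_negb.
by rewrite sum1_card card_ord.
Qed.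

Lemma sum_ind_eq (N c : nat) : \sum_(k < N) ((k : nat) == c)%:R = (c < N)%:R :> R.
Proof.
case: (ltnP c N) => h.
  rewrite (bigD1 (Ordinal h)) //= eqxx big1 ?addr0 // => k hk.
  case: eqP => // e; move: hk; suff -> : k = Ordinal h by rewrite eqxx.
  by apply: val_inj.
rewrite big1 // => k _; case: eqP => // e.
by move: (ltn_ord k); rewrite e ltnNge h.
Qed.

Lemma sum_pick (N k : nat) (F : nat -> R) : (k < N)%N ->
  \sum_(i < N) F i * (k == i)%:R = F k.
Proof.
move=> h; rewrite (bigD1 (Ordinal h)) //= eqxx mulr1 big1 ?addr0 // => i hi.
case: eqP; last by rewrite mulr0.
move=> e; move: hi; suff -> : i = Ordinal h by rewrite eqxx.
by apply: val_inj.
Qed.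

Definition Fp (B : nat) : {poly R} :=
  \sum_(k < (n - B).+1) ('C(n.-1, k))%:R *: ('X^k * (1 - 'X)^+(n.-1 - k)).

Lemma Gf_const (B : nat) (q : R) i : (1 <= B <= n)%N -> Gf B (fun _ => q) i = (Fp B).[1 - q].
Proof.
move=> /andP [B1 Bn].
have E a : (B <= ncommit a)%N%:R = \sum_(k < (n - B).+1) ('X^(nfail a))`_k :> R.
  under eq_bigr do rewrite coefXn.
  rewrite sum_ind_eq; have := ncommit_nfail a.
  move: (ncommit a) (nfail a) => x y h.
  suff -> : (B <= x)%N = (y < (n - B).+1)%N by [].
  apply/idP/idP; lia.
rewrite /Gf; under eq_bigr do rewrite E big_distrr.
rewrite exchange_big /=.
have G : \sum_(a : {ffun 'I_n -> bool})
      (\prod_j act_prob (if j == i then 1 else q) (a j)) *: 'X^(nfail a)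
    = (q%:P + (1 - q)%:P * 'X) ^+ n.-1.
  rewrite /nfail.
  under eq_bigr do rewrite -prodrXr -scaler_prod.
  rewrite -(bigA_distr_bigA (fun j b => act_prob (if j == i then 1 else q) b *: 'X^(~~ b))) /=.
  rewrite (bigD1 i) //= big_bool /= eqxx /act_prob subrr scale0r addr0 expr0 scale1r mul1r.
  have -> : \prod_(j < n | j != i)
      \big[+%R/0]_(b : bool) ((if b then (if j == i then 1 else q) else 1 - (if j == i then 1 else q)) *: 'X^(~~ b))
     = \prod_(j < n | j != i) (q%:P + (1 - q)%:P * 'X).
    apply: eq_bigr => j /negbTE ->; rewrite big_bool /= expr0 expr1.
    by rewrite -!mul_polyC mulr1.
  by rewrite prodr_const cardC1 card_ord.
have Hk (k : nat) : (k <= n.-1)%N ->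
    (\sum_(a : {ffun 'I_n -> bool})
       (\prod_j act_prob (if j == i then 1 else q) (a j)) * ('X^(nfail a))`_k)
    = ('C(n.-1, k))%:R * ((1 - q) ^+ k * q ^+ (n.-1 - k)).
  move=> kle.
  under eq_bigr do rewrite -coefZ.
  rewrite -coef_sum G exprDn coef_sum.
  under eq_bigr do rewrite coefMn exprMn -!polyC_exp mulrA -polyCM coefCM coefXn -mulrnAl.
  rewrite (@sum_pick _ _ (fun i0 => (q ^+ (n.-1 - i0) * (1 - q) ^+ i0) *+ 'C(n.-1, i0))) //.
  by rewrite mulr_natl mulrC.
rewrite /Fp horner_sum; apply: eq_bigr => k _.
rewrite Hk; last first.
  by have := ltn_ord k; lia.
rewrite !hornerE.
by have -> : 1 - (1 - q) = q by ring.
Qed.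

End Game.

Section Poly.
Variable R : realType.

Definition Fgen (m j : nat) : {poly R} :=
  \sum_(k < j.+1) ('C(m, k))%:R *: ('X^k * (1 - 'X)^+(m - k)).

Lemma Fgen_deriv m j : (j <= m)%N ->
  (Fgen m j)^`() = - ((m * 'C(m.-1, j))%:R) *: ('X^j * (1 - 'X)^+(m.-1 - j)).
Proof.
have d1 : (1 - 'X : {poly R})^`() = -1 by rewrite derivB -polyC1 derivC derivX sub0r.
elim: j => [|j IH] hj.
  rewrite /Fgen big_ord1 !bin0 /= expr0 !mul1r !subn0 muln1 derivZ deriv_exp.
  rewrite d1.
  rewrite -!mul_polyC !polyCN !polyCMn.
  ring.
rewrite /Fgen big_ord_recr /= -/(Fgen m j) derivD IH; last by lia.
rewrite derivZ derivM derivXn deriv_exp d1.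
have e1 : (m.-1 - j = m - j.+1)%N by lia.
have e2 : ((m - j.+1).-1 = m.-1 - j.+1)%N by lia.
rewrite e1 e2 /= exprS.
have b1 := mul_bin_diag m j.
have b2 := mul_bin_down m j.+1.
rewrite b1 b2.
rewrite -!mul_polyC !polyCN !polyCMn !natrM.

ring.
Qed.

End Poly.

From mathcomp Require Import all_classical all_reals all_analysis.
From mathcomp Require Import ring lra zify.
Import Order.TTheory GRing.Theory Num.Theory.
Import numFieldNormedType.Exports.
Local Open Scope ring_scope.

Section Ana.
Variable R : realType.
Local Notation F := (@Fgen R).

Lemma hornerF m j u : (F m j).[u] = \sum_(k < j.+1) ('C(m,k))%:R * (u^+k * (1-u)^+(m-k)).
Proof. by rewrite /Fgen horner_sum; apply: eq_bigr => k _; rewrite !hornerE. Qed.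

Lemma Fgen_ge0 m j u : 0 <= u -> u <= 1 -> 0 <= (F m j).[u].
Proof.
move=> h0 h1; rewrite hornerF; apply: sumr_ge0 => k _.
by apply: mulr_ge0; [exact: ler0n| apply: mulr_ge0; apply: exprn_ge0; lra].
Qed.

Lemma Fgen_pos m j u : 0 <= u -> u < 1 -> 0 < (F m j).[u].
Proof.
move=> h0 h1; rewrite hornerF big_ord_recl /= bin0 expr0 mul1r subn0.
apply: ltr_pwDl; last first.
  apply: sumr_ge0 => k _.
  by apply: mulr_ge0; [exact: ler0n| apply: mulr_ge0; apply: exprn_ge0; lra].
by rewrite mul1r; apply: exprn_gt0; lra.
Qed.

Lemma Fgen_at0 m j : (F m j).[0] = 1.
Proof.
rewrite hornerF big_ord_recl /= bin0 expr0 mul1r subr0 expr1n mulr1 big1 ?addr0 //.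
by move=> k _; rewrite expr0n /= mul0r mulr0.
Qed.

Lemma Fgen_full m u : (F m m).[u] = 1.
Proof.
rewrite hornerF; transitivity ((1 - u + u) ^+ m); last by rewrite subrK expr1n.
rewrite exprDn; apply: eq_bigr => k _.
by rewrite mulr_natl mulrC.
Qed.

Lemma Fgen_noninc m j u1 u2 : (j <= m)%N -> 0 <= u1 -> u1 <= u2 -> u2 <= 1 ->
  (F m j).[u2] <= (F m j).[u1].
Proof.
move=> hj h1 h12 h2.
apply: (@ler0_derive1_le_cc R (horner (F m j)) 0 1).
- by move=> x _; exact: derivable_horner.
- move=> x; rewrite in_itv /= => /andP [x0 x1].
  rewrite -derivE Fgen_deriv // hornerZ mulNr oppr_le0.
  apply: mulr_ge0; first exact: ler0n.
  rewrite hornerM hornerXn horner_exp !hornerE.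
  by apply: mulr_ge0; apply: exprn_ge0; lra.
- by apply: derivable_within_continuous => x _; exact: derivable_horner.
- by rewrite in_itv /=; apply/andP; split; lra.
- by rewrite in_itv /=; apply/andP; split; lra.
- exact: h12.
Qed.

End Ana.

Section Ana2.
Variable R : realType.
Local Notation F := (@Fgen R).

Lemma key_ineq m j (a b t : R) : (j < m)%N -> 0 < a -> a < b -> b < 1 -> 0 < t -> t <= 1 ->
  a * (a*t)^+j * (1 - a*t)^+(m.-1 - j) * (F m j).[b*t]
  < b * (b*t)^+j * (1 - b*t)^+(m.-1 - j) * (F m j).[a*t].
Proof.
move=> hjm ha hab hb ht ht1.
have hat : 0 < 1 - a*t by nra.
have hbt : 0 < 1 - b*t by nra.
rewrite !hornerF !big_distrr /=.
apply: ltr_sum; first by apply/hasP; exists ord0 => //; rewrite mem_index_enum.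
move=> i _.
set r := (m.-1 - j)%N. set s := (j - i)%N.
have hi := ltn_ord i.
have Ea : (a*t)^+j = (a*t)^+i * (a*t)^+s by rewrite -exprD; congr (_ ^+ _); rewrite /s; lia.
have Eb : (b*t)^+j = (b*t)^+i * (b*t)^+s by rewrite -exprD; congr (_ ^+ _); rewrite /s; lia.
have Ea' : (1 - a*t)^+(m - i) = (1 - a*t)^+r * (1 - a*t)^+s.+1.
  by rewrite -exprD; congr (_ ^+ _); rewrite /r /s; lia.
have Eb' : (1 - b*t)^+(m - i) = (1 - b*t)^+r * (1 - b*t)^+s.+1.
  by rewrite -exprD; congr (_ ^+ _); rewrite /r /s; lia.
rewrite Ea Eb Ea' Eb'.
set Z := ('C(m, i))%:R * (a*t)^+i * (b*t)^+i * (1-a*t)^+r * (1-b*t)^+r * t^+s.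
match goal with |- is_true (Order.lt ?L ?M) =>
  have -> : L = Z * (a * (1 - b*t))^+s.+1 by rewrite /Z !exprMn !exprS; ring end.
match goal with |- is_true (Order.lt _ ?M) =>
  have -> : M = Z * (b * (1 - a*t))^+s.+1 by rewrite /Z !exprMn !exprS; ring end.
have Zpos : 0 < Z.
  rewrite /Z; repeat apply: mulr_gt0; try apply: exprn_gt0; try nra.
  by rewrite ltr0n bin_gt0; lia.
rewrite ltr_pM2l // ltrXn2r //; nra.
Qed.


Lemma Fgen_deriv_eval m j u : (j <= m)%N ->
  (F m j)^`().[u] = - ((m * 'C(m.-1, j))%:R) * (u ^+ j * (1 - u) ^+ (m.-1 - j)).
Proof.
move=> hj; rewrite Fgen_deriv // hornerZ hornerM hornerXn horner_exp !hornerE //.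
Qed.

Lemma dhorner (P : {poly R}) x : 'D_1 (horner P) x = P^`().[x].
Proof. by rewrite -derive1E -derivE. Qed.

Lemma ratio_decr m j (a b y0 y1 : R) : (j < m)%N -> 0 < a -> a < b -> b < 1 ->
  0 <= y0 -> y0 < y1 -> y1 <= 1 ->
  (F m j).[a * (1 - y1)] / (F m j).[b * (1 - y1)] < (F m j).[a * (1 - y0)] / (F m j).[b * (1 - y0)].
Proof.
move=> hjm ha hab hb hy0 hy01 hy1.
set NP := (F m j) \Po (a%:P * (1 - 'X)).
set DP := (F m j) \Po (b%:P * (1 - 'X)).
have hN y : (F m j).[a * (1 - y)] = NP.[y] by rewrite /NP horner_comp !hornerE.
have hD y : (F m j).[b * (1 - y)] = DP.[y] by rewrite /DP horner_comp !hornerE.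
have Dpos y : 0 <= y <= 1 -> 0 < DP.[y].
  by move=> /andP [z0 z1]; rewrite -hD; apply: Fgen_pos; nra.
rewrite !hN !hD.
have der y : 0 <= y <= 1 -> derivable (horner NP * (fun y => (horner DP y)^-1))%R y 1.
  move=> hy; apply: derivableM; first exact: derivable_horner.
  apply: derivableV; last exact: derivable_horner.
  by rewrite gt_eqF // Dpos.
have dq (c : R) : (c%:P * (1 - 'X))^`() = - c%:P.
  by rewrite derivM -polyC1 derivC mul0r add0r derivB derivC derivX sub0r mulrN1.
pose f : R -> R := (horner NP * (fun y => (horner DP y)^-1))%R.
have dH : forall x, x \in `]0, 1[ -> derivable f x 1.
  move=> x; rewrite in_itv /= => /andP [x0 x1]; apply: der; apply/andP; split; lra.
have cH : {within `[0, 1], continuous f}%classic.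
  apply: derivable_within_continuous => x; rewrite in_itv /= => hx; exact: der.
have dH' : forall x, x \in `]0, 1[ -> (f^`())%classic x < 0.
  move=> x; rewrite in_itv /= => /andP [x0 x1].
  have hx : 0 <= x <= 1 by apply/andP; split; lra.
  have Dx := Dpos x hx.
  rewrite derive1E deriveM; last 2 first.
  + exact: derivable_horner.
  + by apply: derivableV; [rewrite gt_eqF // | exact: derivable_horner].
  rewrite deriveV; last 2 first.
  + by rewrite gt_eqF.
  + exact: derivable_horner.
  rewrite !dhorner.
  have smul (c d : R) : c *: d = c * d by [].
  have dN (c : R) : ((F m j) \Po (c%:P * (1 - 'X)))^`().[x] = (F m j)^`().[c * (1 - x)] * (- c).
    rewrite deriv_comp hornerM horner_comp dq hornerN hornerC.
    by congr (_ * _); congr (_.[_]); rewrite !hornerE.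
  rewrite /NP /DP !dN !smul -/NP -/DP -hN -hD.
  rewrite !Fgen_deriv_eval; try by apply: ltnW.
  set Fa := (F m j).[a * (1 - x)]. set Fb := (F m j).[b * (1 - x)].
  have Kpos : 0 < ((m * 'C(m.-1, j))%:R : R).
    have hK : (0 < m * 'C(m.-1, j))%N by rewrite muln_gt0 bin_gt0; case: (m) hjm.
    by rewrite ltr0n.
  set K := ((m * 'C(m.-1, j))%:R : R) in Kpos *.
  set r := (m.-1 - j)%N.
  have Fbpos : 0 < Fb by rewrite /Fb hD.
  have hk := @key_ineq m j a b (1 - x) hjm ha hab hb ltac:(lra) ltac:(lra).
  rewrite -/r -/Fa -/Fb in hk.
  match goal with |- is_true (Order.lt ?L _) =>
    have -> : L = K / Fb ^+ 2 * (a * (a * (1 - x)) ^+ j * (1 - a * (1 - x)) ^+ r * Fb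
                 - b * (b * (1 - x)) ^+ j * (1 - b * (1 - x)) ^+ r * Fa)
      by field; rewrite gt_eqF end.
  rewrite pmulr_rlt0; first by rewrite subr_lt0.
  by apply: divr_gt0 => //; apply: exprn_gt0.
have m0 : y0 \in `[0, 1] by rewrite in_itv /=; apply/andP; split; lra.
have m1 : y1 \in `[0, 1] by rewrite in_itv /=; apply/andP; split; lra.
exact: (ltr0_derive1_lt_cc dH dH' cH m1 m0 hy01).
Qed.

End Ana2.

Section Main.
Variable R : realType.
Variables (n B : nat) (p : R).
Hypothesis hn : (1 <= n)%N.
Hypothesis hB : (1 <= B <= n)%N.
Hypothesis hp : 2^-1 < p < 1.

Local Notation m := n.-1.
Local Notation jj := (n - B)%N.
Local Notation F := (Fgen R m jj).

Definition T (q : R) : R := F.[1 - q].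

Lemma hjm : (jj <= m)%N.
Proof. by move: hB hn; clear; lia. Qed.

Lemma p_pos : 0 < p.
Proof. by case/andP: hp => h _; apply: lt_trans h; rewrite invr_gt0 ltr0n. Qed.
Lemma p_gt : 1 - p < p.
Proof.
case/andP: hp => h _.
have : 2^-1 * 2 < p * 2 by rewrite ltr_pM2r.
rewrite mulVf ?pnatr_eq0 //; lra.
Qed.
Lemma p_lt1 : p < 1. Proof. by case/andP: hp. Qed.

Lemma T_ge0 q : 0 <= q -> q <= 1 -> 0 <= T q.
Proof. by move=> h0 h1; apply: Fgen_ge0; lra. Qed.

Lemma T_pos q : 0 < q -> q <= 1 -> 0 < T q.
Proof. by move=> h0 h1; apply: Fgen_pos; lra. Qed.

Lemma T_one : T 1 = 1.
Proof. by rewrite /T subrr Fgen_at0. Qed.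

Lemma T_mono q1 q2 : 0 <= q1 -> q1 <= q2 -> q2 <= 1 -> T q1 <= T q2.
Proof. move=> h1 h12 h2; apply: Fgen_noninc; [exact: hjm|lra|lra|lra]. Qed.

Lemma Gf_T (pi : 'I_n -> R) i q : (forall j, j != i -> pi j = q) -> Gf R n B pi i = T q.
Proof.
move=> H; rewrite (Gf_ext R n B pi (fun _ => q) i H) Gf_const //.
Qed.

Definition Kf (y : R) : R := (1 - p) * T (p + (1 - p) * y) - p * T ((1 - p) + p * y).

Lemma KfE y : Kf y = (1 - p) * F.[(1 - p) * (1 - y)] - p * F.[p * (1 - y)].
Proof.
rewrite /Kf /T.
have -> : 1 - (p + (1 - p) * y) = (1 - p) * (1 - y) by ring.
have -> : 1 - ((1 - p) + p * y) = p * (1 - y) by ring.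
by [].
Qed.

Lemma cross y0 y1 : 0 <= y0 -> y0 < y1 -> y1 <= 1 -> Kf y1 = 0 -> 0 < Kf y0.
Proof.
move=> h0 h01 h1 K1.
have pp := p_pos. have pg := p_gt. have pl := p_lt1.
case: (ltnP 1 B) => hB2; last first.
  exfalso; move: K1; rewrite KfE.
  have -> : jj = m by move: hB hB2 hn; clear; lia.
  rewrite !Fgen_full; lra.
have hj : (jj < m)%N by move: hB hB2 hn; clear; lia.
have := @ratio_decr R m jj (1 - p) p y0 y1 hj ltac:(lra) pg pl h0 h01 h1.
move: K1; rewrite !KfE.
have Fb1 : 0 < F.[p * (1 - y1)] by apply: Fgen_pos; nra.
have Fb0 : 0 < F.[p * (1 - y0)] by apply: Fgen_pos; nra.
have Fa1 : 0 <= F.[(1 - p) * (1 - y1)] by apply: Fgen_ge0; nra.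
have Fa0 : 0 <= F.[(1 - p) * (1 - y0)] by apply: Fgen_ge0; nra.
move: Fb1 Fb0 Fa1 Fa0.
set A1 := F.[(1 - p) * (1 - y1)]. set A0 := F.[(1 - p) * (1 - y0)].
set B1 := F.[p * (1 - y1)]. set B0 := F.[p * (1 - y0)].
move=> Fb1 Fb0 Fa1 Fa0 K1.
rewrite ltr_pdivrMr // mulrAC ltr_pdivlMr // => H.
nra.
Qed.


Definition goody (y : R) : Prop := [/\ 0 <= y, y < 1, Kf y <= 0 & (0 < y -> Kf y = 0)].

Lemma K_one : Kf 1 < 0.
Proof.
have pg := p_gt.
have e1 : p + (1 - p) * 1 = 1 by ring.
have e2 : 1 - p + p * 1 = 1 by ring.
rewrite /Kf e1 e2 T_one; lra.
Qed.

Lemma goody_ex : exists y, goody y.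
Proof.
case: (lerP (Kf 0) 0) => hK0.
  by exists 0; split => //; rewrite ltxx.
pose KP : {poly R} := (1 - p) *: (F \Po ((1 - p)%:P * (1 - 'X))) - p *: (F \Po (p%:P * (1 - 'X))).
have hKP y : Kf y = KP.[y].
  rewrite KfE /KP !hornerE !horner_comp.
  by congr (_ * _.[_] - _ * _.[_]); rewrite !hornerE.
have cont : {within `[0, 1], continuous (horner KP)}%classic.
  by apply: derivable_within_continuous => x _; exact: derivable_horner.
have K1 := K_one.
have [c hc Kc] : exists2 c, c \in `[0, 1] & (horner KP) c = 0.
  apply: IVT => //.
  rewrite -!hKP ge_min le_max; apply/andP; split; apply/orP; [right|left]; lra.
move: hc; rewrite in_itv /= => /andP [c0 c1].
have Kc0 : Kf c = 0 by rewrite hKP.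
have c1' : c < 1.
  rewrite lt_neqAle c1 andbT; apply/eqP => e; move: Kc0; rewrite e; lra.
by exists c; split => //; rewrite Kc0.
Qed.

Lemma goody_uniq y1 y2 : goody y1 -> goody y2 -> y1 = y2.
Proof.
move=> [a0 a1 a2 a3] [b0 b1 b2 b3].
case: (ltgtP y1 y2) => // h.
- have := @cross y1 y2 a0 h (ltW b1) (b3 ltac:(lra)); lra.
- have := @cross y2 y1 b0 h (ltW a1) (a3 ltac:(lra)); lra.
Qed.

Definition qH (x y : R) := p * x + (1 - p) * y.
Definition qL (x y : R) := (1 - p) * x + p * y.
Definition AA (x y : R) := p * T (qH x y) - (1 - p) * T (qL x y).
Definition CC (x y : R) := (1 - p) * T (qH x y) - p * T (qL x y).

Lemma piwT (sigma : 'I_n -> bool -> R) j :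
  piw R n p true sigma j = qH (sigma j true) (sigma j false).
Proof. by rewrite /piw /sig_prob /qH /=. Qed.
Lemma piwF (sigma : 'I_n -> bool -> R) j :
  piw R n p false sigma j = qL (sigma j true) (sigma j false).
Proof. by rewrite /piw /sig_prob /qL /=. Qed.

Lemma util_sym (sigma : 'I_n -> bool -> R) i : Defs.symmetric sigma ->
  exp_util p B sigma i = 2^-1 * (sigma i true * AA (sigma i true) (sigma i false)
                                + sigma i false * CC (sigma i true) (sigma i false)).
Proof.
move=> sym; rewrite util_decomp.
rewrite (@Gf_T _ i (qH (sigma i true) (sigma i false))); last first.
  by move=> j _; rewrite piwT !(sym j i).
rewrite (@Gf_T _ i (qL (sigma i true) (sigma i false))); last first.
  by move=> j _; rewrite piwF !(sym j i).
rewrite piwT piwF /AA /CC /qH /qL; ring.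
Qed.

Lemma util_dev (sigma : 'I_n -> bool -> R) i (f : bool -> bool) : Defs.symmetric sigma ->
  exp_util p B (deviate sigma i f) i =
  2^-1 * ((f true)%:R * AA (sigma i true) (sigma i false)
        + (f false)%:R * CC (sigma i true) (sigma i false)).
Proof.
move=> sym; rewrite util_decomp.
rewrite (@Gf_T _ i (qH (sigma i true) (sigma i false))); last first.
  by move=> j ji; rewrite piwT /deviate (negbTE ji) !(sym j i).
rewrite (@Gf_T _ i (qL (sigma i true) (sigma i false))); last first.
  by move=> j ji; rewrite piwF /deviate (negbTE ji) !(sym j i).
rewrite piwT piwF /deviate eqxx /AA /CC /qH /qL; ring.
Qed.

Lemma bne_ineq (sigma : 'I_n -> bool -> R) i : Defs.symmetric sigma -> is_BNE p B sigma ->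
  forall b1 b0 : bool,
  b1%:R * AA (sigma i true) (sigma i false) + b0%:R * CC (sigma i true) (sigma i false)
  <= sigma i true * AA (sigma i true) (sigma i false) + sigma i false * CC (sigma i true) (sigma i false).
Proof.
move=> sym [_ H] b1 b0.
have := H i (fun s => if s then b1 else b0).
by rewrite util_dev // util_sym //= ler_pM2l // invr_gt0 ltr0n.
Qed.

Lemma act_ge0 (x : R) b : 0 <= x <= 1 -> 0 <= act_prob x b.
Proof. by case/andP => h0 h1; case: b => /=; lra. Qed.

Lemma success_eq (sigma : 'I_n -> bool -> R) :
  success_prob p B sigma = \sum_(w : bool) 2^-1 * \sum_(a : {ffun 'I_n -> bool})
      (\prod_j act_prob (piw R n p w sigma j) (a j)) * (B <= ncommit a)%N%:R.
Proof.
rewrite /success_prob; apply: eq_bigr => w _; congr (_ * _); rewrite -inner_sum.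
apply: eq_bigr => s _; congr (_ * _); rewrite big_mkcond; apply: eq_bigr => a _.
by case: ifP => _; rewrite ?mulr1 ?mulr0.
Qed.

Lemma sum_zero (pi : 'I_n -> R) : (forall j, pi j = 0) ->
  \sum_(a : {ffun 'I_n -> bool}) (\prod_j act_prob (pi j) (a j)) * (B <= ncommit a)%N%:R = 0.
Proof.
move=> H; apply: big1 => a _.
case: (pickP (fun j => a j)) => [j aj | none].
  by rewrite (bigD1 j) //= /act_prob aj H !mul0r.
have -> : ncommit a = 0%N by rewrite /ncommit big1 // => j _; rewrite none.
have -> : (B <= 0)%N = false by move: hB; clear; lia.
by rewrite mulr0.
Qed.

Lemma sum_ge0 (pi : 'I_n -> R) : (forall j, 0 <= pi j <= 1) ->
  0 <= \sum_(a : {ffun 'I_n -> bool}) (\prod_j act_prob (pi j) (a j)) * (B <= ncommit a)%N%:R.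
Proof.
move=> H; apply: sumr_ge0 => a _; apply: mulr_ge0; last exact: ler0n.
by apply: prodr_ge0 => j _; apply: act_ge0.
Qed.

Lemma sum_gt0 (pi : 'I_n -> R) : (forall j, 0 < pi j <= 1) ->
  0 < \sum_(a : {ffun 'I_n -> bool}) (\prod_j act_prob (pi j) (a j)) * (B <= ncommit a)%N%:R.
Proof.
move=> H.
have H' j : 0 <= pi j <= 1 by case/andP: (H j) => h0 h1; rewrite h1 ltW.
pose a1 : {ffun 'I_n -> bool} := [ffun => true].
rewrite (bigD1 a1) //=.
have -> : ncommit a1 = n.
  rewrite /ncommit (eq_bigr (fun _ => 1%N)) ?sum1_card ?card_ord // => j _.
  by rewrite ffunE.
have -> : (B <= n)%N = true by move: hB; clear; lia.
rewrite mulr1.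
have h1 : 0 < \prod_j act_prob (pi j) (a1 j).
  by apply: prodr_gt0 => j _; rewrite ffunE /=; case/andP: (H j).
have h2 : 0 <= \sum_(a : {ffun 'I_n -> bool} | a != a1)
    (\prod_j act_prob (pi j) (a j)) * (B <= ncommit a)%N%:R.
  apply: sumr_ge0 => a _; apply: mulr_ge0; last exact: ler0n.
  by apply: prodr_ge0 => j _; apply: act_ge0.
lra.
Qed.

Lemma CC_Kf y : CC 1 y = Kf y.
Proof. by rewrite /CC /Kf /qH /qL !mulr1. Qed.

Lemma AA_pos1 y : 0 <= y <= 1 -> 0 < AA 1 y.
Proof.
case/andP => y0 y1.
have pp := p_pos. have pg := p_gt. have pl := p_lt1.
have hH : 0 < qH 1 y <= 1 by rewrite /qH; apply/andP; split; nra.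
have hL : 0 <= qL 1 y by rewrite /qL; nra.
have hLH : qL 1 y <= qH 1 y by rewrite /qL /qH; nra.
case/andP: hH => hH0 hH1.
have TH := @T_pos _ hH0 hH1.
have TLH := @T_mono _ _ hL hLH hH1.
rewrite /AA.
have E : p * T (qH 1 y) - (1 - p) * T (qL 1 y)
         = (2 * p - 1) * T (qH 1 y) + (1 - p) * (T (qH 1 y) - T (qL 1 y)) by ring.
rewrite E; apply: ltr_pwDl.
  apply: mulr_gt0 => //; lra.
by apply: mulr_ge0; lra.
Qed.

Lemma sig_BNE ys : goody ys ->
  sym_nt_BNE p B (fun (_ : 'I_n) (s : bool) => if s then 1 else ys).
Proof.
move=> [y0 y1 yK yK0].
set sigma := (fun (_ : 'I_n) (s : bool) => if s then (1 : R) else ys).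
have sym : Defs.symmetric sigma by [].
have prof : is_profile sigma by move=> i [|] /=; apply/andP; split; lra.
have pp := p_pos. have pg := p_gt. have pl := p_lt1.
have Ap := @AA_pos1 ys ltac:(apply/andP; split; lra).
have yC : ys * Kf ys = 0.
  case: (ltrP 0 ys) => h; first by rewrite yK0 // mulr0.
  by rewrite (_ : ys = 0) ?mul0r //; lra.
split; [split => // | split => //].
- move=> i f; rewrite util_dev // util_sym // /sigma /= ler_pM2l; last first.
    by rewrite invr_gt0 ltr0n.
  rewrite CC_Kf yC addr0 mul1r.
  by case: (f true); case: (f false) => /=; lra.
- rewrite /nontrivial success_eq big_bool /=.
  have s1 : 0 < \sum_(a : {ffun 'I_n -> bool})
      (\prod_j act_prob (piw R n p true sigma j) (a j)) * (B <= ncommit a)%N%:R.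
    apply: sum_gt0 => j; rewrite piwT /sigma /= /qH; apply/andP; split; nra.
  have s2 : 0 <= \sum_(a : {ffun 'I_n -> bool})
      (\prod_j act_prob (piw R n p false sigma j) (a j)) * (B <= ncommit a)%N%:R.
    apply: sum_ge0 => j; rewrite piwF /sigma /= /qL; apply/andP; split; nra.
  have h2 : (0 : R) < 2^-1 by rewrite invr_gt0 ltr0n.
  have := mulr_gt0 h2 s1; have := mulr_ge0 (ltW h2) s2; lra.
Qed.

Lemma uniq_part (sigma : 'I_n -> bool -> R) : sym_nt_BNE p B sigma ->
  forall i, sigma i true = 1 /\ goody (sigma i false).
Proof.
move=> [[prof Hb] [nt sym]] i.
have bne : is_BNE p B sigma by split.
have pp := p_pos. have pg := p_gt. have pl := p_lt1.
have I := @bne_ineq sigma i sym bne.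
have I00 := I false false. have I10 := I true false. have I11 := I true true.
move: I00 I10 I11; rewrite /= ?mulr0n ?mulr1n ?mul0r ?mul1r ?add0r ?addr0.
have /andP [x0 x1] := prof i true. have /andP [y0 y1] := prof i false.
move: x0 x1 y0 y1.
set x := sigma i true. set y := sigma i false.
move=> x0 x1 y0 y1 I00 I10 I11.
have nz : 0 < x \/ 0 < y.
  case: (ltrP 0 x) => hx; [by left|]. case: (ltrP 0 y) => hy; [by right|].
  exfalso; have ex : x = 0 by lra. have ey : y = 0 by lra.
  move: nt; rewrite /nontrivial success_eq big_bool /= !sum_zero ?mulr0 ?addr0 ?ltxx //.
  - by move=> j; rewrite piwF !(sym j i) -/x -/y ex ey /qL !mulr0 addr0.
  - by move=> j; rewrite piwT !(sym j i) -/x -/y ex ey /qH !mulr0 addr0.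
have hH0 : 0 < qH x y by rewrite /qH; case: nz => h; nra.
have hH1 : qH x y <= 1 by rewrite /qH; nra.
have hL0 : 0 <= qL x y by rewrite /qL; nra.
have hL1 : qL x y <= 1 by rewrite /qL; nra.
have TH := @T_pos _ hH0 hH1.
have TL0 := @T_ge0 _ hL0 hL1.
move: I00 I10 I11.
set A := AA x y. set C := CC x y.
move=> I00 I10 I11.
have CnegY : C < 0 -> y = 0.
  move=> hC.
  have yC : 0 <= y * C.
    case: (lerP A 0) => hA.
      have : x * A <= 0 by apply: mulr_ge0_le0.
      lra.
    have : x * A <= A by rewrite ler_piMl //; lra.
    lra.
  have : y * C <= 0 by apply: mulr_ge0_le0 => //; lra.
  move=> h; have : y * C = 0 by lra.
  move/eqP; rewrite mulf_eq0 => /orP [/eqP //|/eqP]; lra.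
have Apos : 0 < A.
  case: (ltrP 0 y) => hy.
    have hC : 0 <= C.
      by case: (ltrP C 0) => // /CnegY; lra.
    have E : p * A = (1 - p) * C + (2 * p - 1) * T (qH x y) by rewrite /A /C /AA /CC; ring.
    have : 0 < p * A.
      rewrite E; apply: ltr_pwDr; first by apply: mulr_gt0 => //; lra.
      by apply: mulr_ge0; lra.
    by rewrite pmulr_rgt0.
  have ey : y = 0 by lra.
  have hx : 0 < x by case: nz; lra.
  have hLH : qL x y <= qH x y by rewrite /qL /qH ey; nra.
  have TLH := @T_mono _ _ hL0 hLH hH1.
  have E : A = (2 * p - 1) * T (qH x y) + (1 - p) * (T (qH x y) - T (qL x y))
    by rewrite /A /AA; ring.
  rewrite E; apply: ltr_pwDl; first by apply: mulr_gt0 => //; lra.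
  by apply: mulr_ge0; lra.
have ex : x = 1.
  have : A <= x * A.
    case: (lerP C 0) => hC.
      have : y * C <= 0 by apply: mulr_ge0_le0.
      lra.
    have : y * C <= C by rewrite ler_piMl //; lra.
    lra.
  rewrite -{1}(mul1r A) ler_pM2r // => h; lra.
split => //.
have CK : C = Kf y by rewrite /C ex CC_Kf.
have y1' : y < 1.
  rewrite lt_neqAle y1 andbT; apply/eqP => e.
  have : C < 0.
    rewrite CK e.
    have e1 : p + (1 - p) * 1 = 1 by ring.
    have e2 : 1 - p + p * 1 = 1 by ring.
    rewrite /Kf e1 e2 T_one; lra.
  by move/CnegY; lra.
have Cle : C <= 0.
  case: (lerP C 0) => // hC.
  have : x * A + y * C < A + C.
    rewrite ex mul1r; apply: ler_ltD => //.
    by rewrite gtr_pMl //.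
  lra.
split => //; first by rewrite -CK.
move=> hy; rewrite -CK; apply/eqP; rewrite eq_le Cle /=.
by case: (ltrP C 0) => // /CnegY; lra.
Qed.

Lemma main_sec : exists sigma : 'I_n -> bool -> R,
    [/\ sym_nt_BNE p B sigma,
        (forall sigma' : 'I_n -> bool -> R, sym_nt_BNE p B sigma' ->
           forall i s, sigma' i s = sigma i s) &
        exists lambda : R, 0 <= lambda < 1 /\
          forall i : 'I_n, sigma i true = 1 /\ sigma i false = lambda].
Proof.
have [ys gy] := goody_ex.
exists (fun _ s => if s then 1 else ys); split.
- exact: sig_BNE.
- move=> s' hs' i [|] /=; have [h1 h2] := @uniq_part s' hs' i; first exact: h1.
  exact: (@goody_uniq _ _ h2 gy).
- exists ys; case: gy => g0 g1 _ _; split => //; by rewrite g0 g1.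
Qed.

End Main.

Theorem theorem1 (R : realType) (n B : nat) (p : R) :
  (1 <= n)%N -> (1 <= B <= n)%N -> 2^-1 < p < 1 ->
  exists sigma : 'I_n -> bool -> R,
    [/\ sym_nt_BNE p B sigma,
        (forall sigma' : 'I_n -> bool -> R, sym_nt_BNE p B sigma' ->
           forall i s, sigma' i s = sigma i s) &
        exists lambda : R, 0 <= lambda < 1 /\
          forall i : 'I_n, sigma i true = 1 /\ sigma i false = lambda].
Proof. move=> hn hB hp; exact: main_sec. Qed.
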